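(* Let $p$ be any of the following patterns, or any pattern in the same symmetry class as one of them: $(123,\{0,1\},\{0,1\})$, $(123,\{0,1\},\{0,1,2\})$, $(123,\{0,1\},\{0,1,3\})$, $(123,\{0,1\},\{0,2,3\})$, $(123,\{0,1\},\{1,2,3\})$, $(123,\{0,2\},\{0,1,2\})$, $(123,\{0,2\},\{0,1,3\})$, $(123,\{0,2\},\{0,2,3\})$, $(123,\{0,2\},\{1,2,3\})$, $(123,\{1,2\},\{0,1,2\})$, $(123,\{1,2\},\{0,1,3\})$, $(123,\{0,1,2\},\{0,3\})$, $(123,\{0,3\},\{0,3\})$, $(123,\{0,3\},\{0,1,3\})$, $(132,\{0,1\},\{0,1,2\})$, $(132,\{0,1\},\{0,3\})$, $(132,\{0,1\},\{0,1,3\})$, $(132,\{0,1\},\{0,2,3\})$, $(132,\{0,1\},\{1,2,3\})$, $(132,\{0,2\},\{0,1,2\})$, $(132,\{0,2\},\{0,1,3\})$, $(132,\{0,2\},\{0,2,3\})$, $(132,\{0,2\},\{1,2,3\})$, $(132,\{1,2\},\{0,1,2\})$, $(132,\{1,2\},\{0,1,3\})$, $(132,\{1,2\},\{0,2,3\})$, $(132,\{1,2\},\{1,2,3\})$, $(132,\{0,1,2\},\{0,3\})$, $(132,\{0,1,2\},\{1,3\})$, $(132,\{0,1,2\},\{2,3\})$, $(132,\{0,3\},\{0,1,3\})$, $(132,\{0,3\},\{0,2,3\})$, $(132,\{0,3\},\{1,2,3\})$, $(132,\{1,3\},\{0,1,3\})$, $(132,\{1,3\},\{0,2,3\})$, $(132,\{1,3\},\{1,2,3\})$,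 $(132,\{0,1,3\},\{2,3\})$, $(132,\{2,3\},\{2,3\})$, $(132,\{2,3\},\{0,2,3\})$, $(132,\{2,3\},\{1,2,3\})$. Then for all $n\ge3$, $a_n(p)=n!-(n-2)!$.
   Context: For $n\ge1$, $\mathcal S_n$ is the set of permutations $\pi=\pi_1\cdots\pi_n$ of $[n]$. A bi-vincular pattern of length $k$ is a triple $p=(\sigma,X,Y)$ with $\sigma\in\mathcal S_k$ and $X,Y\subseteq\{0,1,\dots,k\}$. A permutation $\pi\in\mathcal S_n$ contains $p$ if there are indices $1\le i_1<\dots<i_k\le n$ such that $(\pi_{i_1},\dots,\pi_{i_k})$ is order-isomorphic to $\sigma$ and, letting $j_1<\dots<j_k$ be the values $\pi_{i_1},\dots,\pi_{i_k}$ sorted increasingly and setting $i_0=j_0=0$, $i_{k+1}=j_{k+1}=n+1$, one has $i_{x+1}=i_x+1$ for all $x\in X$ and $j_{y+1}=j_y+1$ for all $y\in Y$. Otherwise $\pi$ avoids $p$; $a_n(p)$ is the number of $\pi\in\mathcal S_n$ avoiding $p$. Symmetries: $p^{i}=(\sigma^{-1},Y,X)$, $p^{r}=(\sigma^{r},\{k-x:x\in X\},Y)$, $p^{c}=(\sigma^{c},X,\{k-y:y\in Y\})$ with $\sigma^r_j=\sigma_{k+1-j}$, $\sigma^c_j=k+1-\sigma_j$; the symmetry class of $p$ consists of all patterns obtained from $p$ by finitely many applications of these maps. *)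

(* Defs.v *)
From mathcomp Require Import all_boot all_order all_fingroup.
Set Implicit Arguments. Unset Strict Implicit. Unset Printing Implicit Defensive.

(* A bi-vincular pattern (sigma, X, Y) of length k, with sigma in S_k
   (permutation of 'I_k, i.e. values 0..k-1 standing for 1..k) and
   X, Y subsets of {0,...,k} = 'I_k.+1. *)
Record bvpat := BVPat {
  plen : nat;
  psig : 'S_plen;
  pX : {set 'I_plen.+1};
  pY : {set 'I_plen.+1} }.

Definition ext_seq (k n : nat) (s : seq nat) (x : nat) : nat :=
  if x == 0 then 0 else if x <= k then nth 0 s x.-1 else n.+1.

Definition occurrence (n : nat) (pi : 'S_n) (p : bvpat) (ii : {ffun 'I_(plen p) -> 'I_n}) : bool :=
  let k := plen p in
  let ps := [seq (nat_of_ord (ii a)).+1 | a <- enum 'I_k] in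
  let js := sort leq [seq (nat_of_ord (pi (ii a))).+1 | a <- enum 'I_k] in
  [&& [forall a : 'I_k, forall b : 'I_k, (a < b) ==> (ii a < ii b)],
      [forall a : 'I_k, forall b : 'I_k,
         (pi (ii a) < pi (ii b)) == (psig p a < psig p b)],
      [forall x in pX p, ext_seq k n ps x.+1 == (ext_seq k n ps x).+1] &
      [forall y in pY p, ext_seq k n js y.+1 == (ext_seq k n js y).+1]].

Definition contains (n : nat) (pi : 'S_n) (p : bvpat) : bool :=
  [exists ii : {ffun 'I_(plen p) -> 'I_n}, @occurrence n pi p ii].

Definition avoiders_count (p : bvpat) (n : nat) : nat :=
  #|[set pi : 'S_n | ~~ contains pi p]|.

Definition revperm (k : nat) : 'S_k := perm (@rev_ord_inj k).

Definition pat_i (p : bvpat) : bvpat :=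
  @BVPat (plen p) (psig p)^-1 (pY p) (pX p).
(* sigma^r_j = sigma_{k+1-j}; X -> {k - x} *)
Definition pat_r (p : bvpat) : bvpat :=
  @BVPat (plen p) (revperm (plen p) * psig p)%g
         [set rev_ord x | x in pX p] (pY p).
(* sigma^c_j = k+1-sigma_j; Y -> {k - y} *)
Definition pat_c (p : bvpat) : bvpat :=
  @BVPat (plen p) (psig p * revperm (plen p))%g
         (pX p) [set rev_ord y | y in pY p].

Inductive in_symclass (p : bvpat) : bvpat -> Prop :=
  | sc_refl : in_symclass p p
  | sc_i q : in_symclass p q -> in_symclass p (pat_i q)
  | sc_r q : in_symclass p q -> in_symclass p (pat_r q)
  | sc_c q : in_symclass p q -> in_symclass p (pat_c q).

Definition s123 : 'S_3 := 1%g.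
Definition s132 : 'S_3 := tperm (inord 1 : 'I_3) (inord 2 : 'I_3).

Definition mkset3 (s : seq nat) : {set 'I_4} := [set x : 'I_4 | nat_of_ord x \in s].
Definition mk3 (sg : 'S_3) (X Y : seq nat) : bvpat := @BVPat 3 sg (mkset3 X) (mkset3 Y).

Definition base_pats : seq bvpat :=
  [:: mk3 s123 [:: 0;1] [:: 0;1];
      mk3 s123 [:: 0;1] [:: 0;1;2];
      mk3 s123 [:: 0;1] [:: 0;1;3];
      mk3 s123 [:: 0;1] [:: 0;2;3];
      mk3 s123 [:: 0;1] [:: 1;2;3];
      mk3 s123 [:: 0;2] [:: 0;1;2];
      mk3 s123 [:: 0;2] [:: 0;1;3];
      mk3 s123 [:: 0;2] [:: 0;2;3];
      mk3 s123 [:: 0;2] [:: 1;2;3];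
      mk3 s123 [:: 1;2] [:: 0;1;2];
      mk3 s123 [:: 1;2] [:: 0;1;3];
      mk3 s123 [:: 0;1;2] [:: 0;3];
      mk3 s123 [:: 0;3] [:: 0;3];
      mk3 s123 [:: 0;3] [:: 0;1;3];
      mk3 s132 [:: 0;1] [:: 0;1;2];
      mk3 s132 [:: 0;1] [:: 0;3];
      mk3 s132 [:: 0;1] [:: 0;1;3];
      mk3 s132 [:: 0;1] [:: 0;2;3];
      mk3 s132 [:: 0;1] [:: 1;2;3];
      mk3 s132 [:: 0;2] [:: 0;1;2];
      mk3 s132 [:: 0;2] [:: 0;1;3];
      mk3 s132 [:: 0;2] [:: 0;2;3];
      mk3 s132 [:: 0;2] [:: 1;2;3];
      mk3 s132 [:: 1;2] [:: 0;1;2];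
      mk3 s132 [:: 1;2] [:: 0;1;3];
      mk3 s132 [:: 1;2] [:: 0;2;3];
      mk3 s132 [:: 1;2] [:: 1;2;3];
      mk3 s132 [:: 0;1;2] [:: 0;3];
      mk3 s132 [:: 0;1;2] [:: 1;3];
      mk3 s132 [:: 0;1;2] [:: 2;3];
      mk3 s132 [:: 0;3] [:: 0;1;3];
      mk3 s132 [:: 0;3] [:: 0;2;3];
      mk3 s132 [:: 0;3] [:: 1;2;3];
      mk3 s132 [:: 1;3] [:: 0;1;3];
      mk3 s132 [:: 1;3] [:: 0;2;3];
      mk3 s132 [:: 1;3] [:: 1;2;3];
      mk3 s132 [:: 0;1;3] [:: 2;3];
      mk3 s132 [:: 2;3] [:: 2;3];
      mk3 s132 [:: 2;3] [:: 0;2;3];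
      mk3 s132 [:: 2;3] [:: 1;2;3] ].

(* Main.v *)
Require Import Defs.
From mathcomp Require Import all_boot all_order all_fingroup.
From Stdlib Require List.
From mathcomp Require Import zify.
Set Implicit Arguments. Unset Strict Implicit. Unset Printing Implicit Defensive.

Lemma ext_refl k n (s s' : seq nat) :
  size s = k -> size s' = k ->
  (forall i, i < k -> nth 0 s' i = n.+1 - nth 0 s (k.-1 - i)) ->
  forall y, y <= k.+1 -> ext_seq k n s' y = n.+1 - ext_seq k n s (k.+1 - y).
Proof.
move=> Hs Hs' Hn y Hy; rewrite /ext_seq.
have [->|y0] := eqVneq y 0.
  by rewrite /= subn0 ltnn subnn.
case: ifP => yk.
  have -> : (k.+1 - y == 0) = false by apply/negbTE; lia.
  have -> : k.+1 - y <= k by lia.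
  rewrite Hn; last by lia.
  congr (_ - nth 0 s _); lia.
have -> : k.+1 - y = 0 by lia.
by rewrite /= subn0.
Qed.

Lemma ext_le k n s y : (forall i, i < k -> nth 0 s i <= n) -> ext_seq k n s y <= n.+1.
Proof.
move=> H; rewrite /ext_seq; case: ifP => // y0; case: ifP => // yk.
have := H y.-1; lia.
Qed.

Lemma refl_cond k n (s s' : seq nat) x :
  size s = k -> size s' = k ->
  (forall i, i < k -> nth 0 s' i = n.+1 - nth 0 s (k.-1 - i)) ->
  (forall i, i < k -> nth 0 s i <= n) -> x <= k ->
  (ext_seq k n s' (k - x).+1 == (ext_seq k n s' (k - x)).+1) =
  (ext_seq k n s x.+1 == (ext_seq k n s x).+1).
Proof.
move=> Hs Hs' Hn Hb xk.
rewrite !(ext_refl Hs Hs' Hn); try lia.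
have -> : k.+1 - (k - x).+1 = x by lia.
have -> : k.+1 - (k - x) = x.+1 by lia.
have := ext_le x Hb; have := ext_le x.+1 Hb.
move: (ext_seq k n s x) (ext_seq k n s x.+1) => a b ha hb.
apply/eqP/eqP; lia.
Qed.

Lemma sort_iso k (sg : 'S_k) (f : 'I_k -> nat) :
  (forall a b, (f a < f b) = (sg a < sg b)) ->
  sort leq [seq f a | a <- enum 'I_k] = [seq f ((sg^-1)%g r) | r <- enum 'I_k].
Proof.
move=> Hf.
apply: (sorted_eq leq_trans anti_leq).
- exact: sort_sorted leq_total _.
- have S0 : sorted (relpre val ltn) (enum 'I_k).
    by rewrite -sorted_map val_enum_ord iota_ltn_sorted.
  move: S0; apply: homo_sorted => a b /= ab.
  by apply: ltnW; rewrite Hf !permKV.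
- have -> : [seq f ((sg^-1)%g r) | r <- enum 'I_k] = map f (map (sg^-1)%g (enum 'I_k)) := map_comp _ _ _.
  rewrite perm_sort; apply: perm_map.
  apply: uniq_perm; first exact: enum_uniq.
    by rewrite map_inj_uniq ?enum_uniq //; exact: perm_inj.
  move=> x; rewrite mem_enum; symmetry; apply/mapP; exists (sg x); first by rewrite mem_enum.
  by rewrite permK.
Qed.

Lemma inc_iff k n (ii : {ffun 'I_k -> 'I_n}) :
  [forall a : 'I_k, forall b : 'I_k, (a < b) ==> (ii a < ii b)] -> forall a b : 'I_k, (ii a < ii b) = (a < b).
Proof.
move/forallP=> H a b.
case: (ltngtP a b) => [ab|ba|/val_inj->].
- by move: (forallP (H a) b) => /implyP; apply.
- apply: leq_gtF; apply: ltnW; by move: (forallP (H b) a) => /implyP; apply.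
- exact: ltnn.
Qed.

Lemma iso_iff k n (pi : 'S_n) (sg : 'S_k) (ii : {ffun 'I_k -> 'I_n}) :
  [forall a : 'I_k, forall b : 'I_k, (pi (ii a) < pi (ii b)) == (sg a < sg b)] ->
  forall a b, (pi (ii a) < pi (ii b)) = (sg a < sg b).
Proof. by move/forallP=> H a b; have /forallP/(_ b)/eqP := H a. Qed.

Lemma nth_map_enum k (f : 'I_k -> nat) i (Hi : i < k) :
  nth 0 [seq f a | a <- enum 'I_k] i = f (Ordinal Hi).
Proof.
rewrite (nth_map (Ordinal Hi)); last by rewrite size_enum_ord.
congr f; apply: val_inj; by rewrite /= nth_enum_ord.
Qed.

Lemma refl_map k n (g h : 'I_k -> nat) x :
  (forall a, g a <= n) -> (forall a, h a = n.+1 - g (rev_ord a)) -> x <= k ->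
  (ext_seq k n [seq h a | a <- enum 'I_k] (k - x).+1 ==
     (ext_seq k n [seq h a | a <- enum 'I_k] (k - x)).+1) =
  (ext_seq k n [seq g a | a <- enum 'I_k] x.+1 ==
     (ext_seq k n [seq g a | a <- enum 'I_k] x).+1).
Proof.
move=> Hg Hh xk; apply: refl_cond => //; try by rewrite size_map size_enum_ord.
- move=> i Hi; rewrite nth_map_enum Hh.
  have Hi' : k.-1 - i < k by lia.
  rewrite nth_map_enum; congr (_ - g _); apply: val_inj => /=; lia.
- by move=> i Hi; rewrite nth_map_enum.
Qed.

Lemma perm_enum k (g : 'I_k -> 'I_k) : injective g -> perm_eq (map g (enum 'I_k)) (enum 'I_k).
Proof.
move=> Hg; apply: uniq_perm; first by rewrite map_inj_uniq ?enum_uniq.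
  exact: enum_uniq.
have [] := uniq_min_size (s1 := map g (enum 'I_k)) (s2 := enum 'I_k).
- by rewrite map_inj_uniq ?enum_uniq.
- by move=> x; rewrite mem_enum.
- by rewrite [in X in _ <= X]size_map.
move=> _ H x; exact: H.
Qed.

Lemma revpermE k (x : 'I_k) : revperm k x = rev_ord x.
Proof. by rewrite /revperm permE. Qed.

Lemma revperm_inv k : (revperm k)^-1%g = revperm k.
Proof.
apply/permP => x; apply: (perm_inj (s := revperm k)).
by rewrite permKV !revpermE rev_ordK.
Qed.

Lemma revperm_invol k : (revperm k * revperm k)%g = 1%g.
Proof. by apply/permP => x; rewrite permM !revpermE rev_ordK perm1. Qed.

Lemma rev_lt n (x y : 'I_n) : (rev_ord x < rev_ord y) = (y < x).
Proof. rewrite /=; have := ltn_ord x; have := ltn_ord y; move=> ? ?; apply/idP/idP; lia. Qed.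

Lemma sort_js k n (pi : 'S_n) (sg : 'S_k) (ii : {ffun 'I_k -> 'I_n}) :
  (forall a b, (pi (ii a) < pi (ii b)) = (sg a < sg b)) ->
  sort leq [seq (pi (ii a)).+1 | a <- enum 'I_k] =
  [seq (pi (ii ((sg^-1)%g r))).+1 | r <- enum 'I_k].
Proof. by move=> Hs; apply: (sort_iso (f := fun a => (pi (ii a)).+1)). Qed.

Lemma occ_i n (pi : 'S_n) k (sg : 'S_k) X Y (ii : {ffun 'I_k -> 'I_n}) :
  @occurrence n pi (BVPat sg X Y) ii ->
  @occurrence n pi^-1 (pat_i (BVPat sg X Y)) [ffun r => pi (ii ((sg^-1)%g r))].
Proof.
rewrite /occurrence /= => /and4P [Hinc Hiso HX HY].
have Hi := inc_iff Hinc; have Hs := iso_iff Hiso.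
apply/and4P; split.
- apply/forallP => a; apply/forallP => b; apply/implyP => ab.
  by rewrite !ffunE Hs !permKV.
- apply/forallP => a; apply/forallP => b.
  by rewrite !ffunE !permK Hi.
- have -> : [seq (nat_of_ord ([ffun r => pi (ii ((sg^-1)%g r))] a)).+1 | a <- enum 'I_k]
          = [seq (pi (ii ((sg^-1)%g r))).+1 | r <- enum 'I_k].
    by apply: eq_map => a; rewrite ffunE.
  by rewrite -sort_js.
- rewrite (sort_iso (sg := (sg^-1)%g)); last by move=> a b; rewrite !ffunE !permK ltnS Hi.
  have -> : [seq (nat_of_ord ((pi^-1)%g ([ffun r => pi (ii ((sg^-1)%g r))] (((sg^-1)^-1)%g r)))).+1 | r <- enum 'I_k]
          = [seq (nat_of_ord (ii a)).+1 | a <- enum 'I_k].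
    by apply: eq_map => a; rewrite ffunE invgK !permK.
  exact: HX.
Qed.

Lemma occ_r n (pi : 'S_n) k (sg : 'S_k) X Y (ii : {ffun 'I_k -> 'I_n}) :
  @occurrence n pi (BVPat sg X Y) ii ->
  @occurrence n (revperm n * pi)%g (pat_r (BVPat sg X Y)) [ffun a => rev_ord (ii (rev_ord a))].
Proof.
rewrite /occurrence /= => /and4P [Hinc Hiso HX HY].
have Hi := inc_iff Hinc; have Hs := iso_iff Hiso.
apply/and4P; split.
- apply/forallP => a; apply/forallP => b; apply/implyP => ab.
  rewrite !ffunE rev_lt Hi rev_lt //.
- apply/forallP => a; apply/forallP => b.
  by rewrite !ffunE !permM !revpermE !rev_ordK Hs.
- apply/forallP => x; apply/implyP => /imsetP [y yX ->].
  have -> : (nat_of_ord (rev_ord y)) = k - y by rewrite /= subSS.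
  rewrite (refl_map (g := fun a => (nat_of_ord (ii a)).+1)).
  + by move: HX => /forallP/(_ y)/implyP; apply.
  + by move=> a; apply: ltn_ord.
  + move=> a; rewrite ffunE /=; have := ltn_ord (ii (rev_ord a)); lia.
  + by have := ltn_ord y; lia.
- have -> : sort leq [seq (nat_of_ord ((revperm n * pi)%g ([ffun a => rev_ord (ii (rev_ord a))] a))).+1 | a <- enum 'I_k]
      = sort leq [seq (nat_of_ord (pi (ii a))).+1 | a <- enum 'I_k].
    apply/perm_sortP; [exact: leq_total|exact: leq_trans|exact: anti_leq|].
    have -> : [seq (nat_of_ord ((revperm n * pi)%g ([ffun a => rev_ord (ii (rev_ord a))] a))).+1 | a <- enum 'I_k]
      = map (fun a => (nat_of_ord (pi (ii a))).+1) (map (@rev_ord k) (enum 'I_k)).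
      by elim: (enum 'I_k) => //= a s ->; rewrite ffunE permM revpermE rev_ordK.
    by apply: perm_map; apply: perm_enum; exact: rev_ord_inj.
  exact: HY.
Qed.

Lemma occ_c n (pi : 'S_n) k (sg : 'S_k) X Y (ii : {ffun 'I_k -> 'I_n}) :
  @occurrence n pi (BVPat sg X Y) ii ->
  @occurrence n (pi * revperm n)%g (pat_c (BVPat sg X Y)) ii.
Proof.
rewrite /occurrence /= => /and4P [Hinc Hiso HX HY].
have Hi := inc_iff Hinc; have Hs := iso_iff Hiso.
apply/and4P; split => //.
- apply/forallP => a; apply/forallP => b.
  by rewrite !permM !revpermE !rev_lt Hs.
- rewrite (sort_iso (sg := (sg * revperm k)%g)); last first.
    by move=> a b; rewrite ltnS !permM !revpermE !rev_lt Hs.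
  apply/forallP => x; apply/implyP => /imsetP [y yY ->].
  have -> : (nat_of_ord (rev_ord y)) = k - y by rewrite /= subSS.
  rewrite (refl_map (g := fun a => (nat_of_ord (pi (ii ((sg^-1)%g a)))).+1)).
  + by move: HY => /forallP/(_ y)/implyP; rewrite (sort_js Hs); apply.
  + by move=> a; apply: ltn_ord.
  + move=> a; rewrite invMg revperm_inv !permM !revpermE /=.
    by case: (pi _) => z hz /=; lia.
  + by have := ltn_ord y; lia.
Qed.

Lemma card_invol n (f : 'S_n -> 'S_n) (P Q : pred 'S_n) :
  involutive f -> (forall pi, Q pi = P (f pi)) ->
  #|[set pi | Q pi]| = #|[set pi | P pi]|.
Proof.
move=> Hf HQ; rewrite -[RHS](card_imset _ (inv_inj Hf)).
have -> // : [set pi | Q pi] = f @: [set pi | P pi].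
apply/setP => x; rewrite inE; apply/idP/imsetP => [Qx|[y]].
  by exists (f x); rewrite ?inE -?HQ ?Hf.
by rewrite inE => Py ->; rewrite HQ Hf.
Qed.

Lemma cont_i n (pi : 'S_n) p : contains pi p -> contains pi^-1 (pat_i p).
Proof.
case: p => k sg X Y; move/existsP => [ii H]; apply/existsP.
by exists [ffun r => pi (ii ((sg^-1)%g r))]; apply: occ_i.
Qed.

Lemma cont_r n (pi : 'S_n) p : contains pi p -> contains (revperm n * pi)%g (pat_r p).
Proof.
case: p => k sg X Y; move/existsP => [ii H]; apply/existsP.
by exists [ffun a => rev_ord (ii (rev_ord a))]; apply: occ_r.
Qed.

Lemma cont_c n (pi : 'S_n) p : contains pi p -> contains (pi * revperm n)%g (pat_c p).
Proof.
case: p => k sg X Y; move/existsP => [ii H]; apply/existsP.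
by exists ii; apply: occ_c.
Qed.

Lemma imset_rev2 k (X : {set 'I_k}) : [set rev_ord x | x in [set rev_ord x | x in X]] = X.
Proof.
rewrite -imset_comp; apply/setP => x; apply/imsetP/idP => [[y yX ->]|xX].
  by rewrite /= rev_ordK.
by exists x => //; rewrite /= rev_ordK.
Qed.

Lemma pat_i2 p : pat_i (pat_i p) = p.
Proof. by case: p => k sg X Y; rewrite /pat_i /= invgK. Qed.
Lemma pat_r2 p : pat_r (pat_r p) = p.
Proof. by case: p => k sg X Y; rewrite /pat_r /= mulgA revperm_invol mul1g imset_rev2. Qed.
Lemma pat_c2 p : pat_c (pat_c p) = p.
Proof. by case: p => k sg X Y; rewrite /pat_c /= -mulgA revperm_invol mulg1 imset_rev2. Qed.

Lemma av_i p n : avoiders_count (pat_i p) n = avoiders_count p n.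
Proof.
rewrite /avoiders_count.
apply: (@card_invol n (fun pi => pi^-1%g) (fun pi => ~~ contains pi p) (fun pi => ~~ contains pi (pat_i p))).
  exact: invgK.
move=> pi /=; congr negb; apply/idP/idP => H.
  by rewrite -(pat_i2 p); apply: cont_i.
by rewrite -(invgK pi); apply: cont_i.
Qed.

Lemma av_r p n : avoiders_count (pat_r p) n = avoiders_count p n.
Proof.
rewrite /avoiders_count.
apply: (@card_invol n (fun pi => (revperm n * pi)%g) (fun pi => ~~ contains pi p) (fun pi => ~~ contains pi (pat_r p))).
  by move=> pi; rewrite mulgA revperm_invol mul1g.
move=> pi /=; congr negb; apply/idP/idP => H.
  by rewrite -(pat_r2 p); apply: cont_r.
by have := cont_r H; rewrite mulgA revperm_invol mul1g.
Qed.

Lemma av_c p n : avoiders_count (pat_c p) n = avoiders_count p n.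
Proof.
rewrite /avoiders_count.
apply: (@card_invol n (fun pi => (pi * revperm n)%g) (fun pi => ~~ contains pi p) (fun pi => ~~ contains pi (pat_c p))).
  by move=> pi; rewrite -mulgA revperm_invol mulg1.
move=> pi /=; congr negb; apply/idP/idP => H.
  by rewrite -(pat_c2 p); apply: cont_c.
by have := cont_c H; rewrite -mulgA revperm_invol mulg1.
Qed.

Lemma av_sym b p n : in_symclass b p -> avoiders_count p n = avoiders_count b n.
Proof. by elim=> [|q _ IH|q _ IH|q _ IH] //; rewrite ?av_i ?av_r ?av_c. Qed.

Definition pinnedN n (pi : 'S_n) (s : seq (nat * nat)) : bool :=
  all (fun pr => [exists x : 'I_n, (nat_of_ord x == pr.1) && (nat_of_ord (pi x) == pr.2)]) s.
Definition validN n (s : seq (nat * nat)) : bool :=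
  [&& uniq (map fst s), uniq (map snd s) & all (fun pr => (pr.1 < n) && (pr.2 < n)) s].

Lemma exists_h n s : validN n s -> exists h : 'S_n,
  forall pr, pr \in s -> forall x : 'I_n, nat_of_ord x = pr.2 -> nat_of_ord (h x) = pr.1.
Proof.
elim: s => [|[p v] s IH]; first by move=> _; exists 1%g.
rewrite /validN /= => /and3P [/andP [pn un1] /andP [vn un2] /andP [/andP [Hp Hv] Hall]].
have [h Hh] := IH (introT and3P (And3 un1 un2 Hall)).
pose op := Ordinal Hp; pose ov := Ordinal Hv.
exists (h * tperm (h ov) op)%g => pr; rewrite inE => /orP [/eqP -> | prs] x Hx.
  have -> : x = ov by apply: val_inj.
  by rewrite permM tpermL.
rewrite permM tpermD; first exact: Hh.
- apply/eqP => /perm_inj E; move: Hx; rewrite -E /= => Ev.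
  move: vn; rewrite Ev; case/negP; by apply/mapP; exists pr.
- apply/eqP => E; move: (Hh pr prs x Hx); rewrite -E /= => Ep.
  move: pn; rewrite Ep; case/negP; by apply/mapP; exists pr.
Qed.

Lemma card_valset n (L : seq nat) : uniq L -> all (fun x => x < n) L ->
  #|[set x : 'I_n | nat_of_ord x \in L]| = size L.
Proof.
move=> uL aL.
have -> : [set x : 'I_n | nat_of_ord x \in L] = [set x in (pmap insub L : seq 'I_n)].
  by apply/setP => x; rewrite !inE mem_pmap_sub.
rewrite cardsE; have /card_uniqP -> := pmap_sub_uniq 'I_n uL.
rewrite size_pmap_sub; apply/eqP; rewrite -all_count; exact: aL.
Qed.

Lemma card_bij n (f g : 'S_n -> 'S_n) (P Q : pred 'S_n) :
  cancel f g -> cancel g f -> (forall pi, Q pi = P (f pi)) ->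
  #|[set pi | Q pi]| = #|[set pi | P pi]|.
Proof.
move=> Hfg Hgf HQ; rewrite -[RHS](card_imset _ (can_inj Hgf)).
have -> // : [set pi | Q pi] = g @: [set pi | P pi].
apply/setP => x; rewrite inE; apply/idP/imsetP => [Qx|[y]].
  by exists (f x); rewrite ?inE -?HQ ?Hfg.
by rewrite inE => Py ->; rewrite HQ Hgf.
Qed.

Lemma card_pinned n s : validN n s -> #|[set pi : 'S_n | pinnedN pi s]| = (n - size s)`!.
Proof.
move=> Hv; have [h Hh] := exists_h Hv.
move: (Hv); rewrite /validN => /and3P [u1 u2 Hall].
pose A := [set x : 'I_n | nat_of_ord x \in map fst s].
have cA : #|A| = size s.
  rewrite card_valset ?size_map //; rewrite all_map; apply/allP => pr prs /=.
  by move/allP: Hall => /(_ pr prs) /andP [].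
have -> : (n - size s)`! = #|perm_on (~: A)|.
  by rewrite card_perm; congr _`!; have := cardsC A; rewrite card_ord cA; lia.
rewrite -[RHS]cardsE.
apply: (card_bij (P := fun q => q \in perm_on (~: A)) (f := fun pi => (pi * h)%g) (g := fun q => (q * h^-1)%g)).
- by move=> pi; rewrite mulgK.
- by move=> q; rewrite mulgVK.
move=> pi; apply/idP/idP.
- move/allP => Hp; apply/subsetP => x Hx; rewrite in_setC; apply/negP => xA.
  move: Hx; rewrite unfold_in /=; move/eqP; apply.
  move: xA; rewrite inE => /mapP [pr prs Ex].
  have /existsP [y /andP [/eqP y1 /eqP y2]] := Hp pr prs.
  have exy : x = y by apply: val_inj; rewrite /= y1.
  rewrite exy permM; apply: val_inj => /=; by rewrite (Hh pr prs _ y2) y1.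
- move/subsetP => Hq; apply/allP => pr prs.
  have /andP [p1 p2] := allP Hall pr prs.
  pose x := Ordinal p1; pose y := Ordinal p2.
  have xA : x \in A by rewrite inE; apply/mapP; exists pr.
  have hx : (pi * h)%g x = x.
    apply/eqP; apply/negPn/negP => nx.
    have := Hq x; rewrite unfold_in /= => /(_ nx); by rewrite in_setC xA.
  apply/existsP; exists x; rewrite eqxx /=.
  have hy : h y = x by apply: val_inj; rewrite /= (Hh pr prs).
  rewrite permM -{2}hy in hx; by rewrite (perm_inj hx) /=.
Qed.

Lemma card_famP n m r (S : 'I_m -> seq (nat * nat)) :
  (forall t, validN n (S t)) -> (forall t, size (S t) = r) ->
  (forall (pi : 'S_n) t t', pinnedN pi (S t) -> pinnedN pi (S t') -> t = t') ->
  #|[set pi : 'S_n | [exists t, pinnedN pi (S t)]]| = m * (n - r)`!.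
Proof.
move=> Hv Hs Hu.
have E : forall Q : pred 'S_n, #|[set pi | Q pi]| = \sum_pi (Q pi : nat).
  move=> Q; rewrite -sum1_card big_mkcond /=; apply: eq_bigr => pi _.
  by rewrite inE; case: (Q pi).
rewrite E.
have -> : m * (n - r)`! = \sum_(t < m) #|[set pi : 'S_n | pinnedN pi (S t)]|.
  have -> : \sum_(t < m) #|[set pi : 'S_n | pinnedN pi (S t)]| = \sum_(t < m) (n - r)`!.
    by apply: eq_bigr => t _; rewrite card_pinned ?Hs.
  by rewrite sum_nat_const card_ord.
have -> : \sum_(t < m) #|[set pi : 'S_n | pinnedN pi (S t)]| = \sum_(t < m) \sum_(pi : 'S_n) (pinnedN pi (S t) : nat).
  by apply: eq_bigr => t _; rewrite E.
rewrite exchange_big /=; apply: eq_bigr => pi _.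
case: existsP => [[t0 H0]|H].
  rewrite (bigD1 t0) //= H0 big1 // => t nt; case Ht: (pinnedN pi (S t)) => //.
  by move: nt; rewrite (Hu _ _ _ Ht H0) eqxx.
by rewrite big1 // => t _; case Ht: (pinnedN pi (S t)) => //; case: H; exists t.
Qed.

Lemma forall3 (P : pred 'I_3) : [forall a, P a] = [&& P (inord 0), P (inord 1) & P (inord 2)].
Proof.
apply/forallP/and3P => [H|[H0 H1 H2] a]; first by split; apply: H.
have : nat_of_ord a < 3 by [].
case: a => [[|[|[|a]]] Ha] //= _.
- by have -> : Ordinal Ha = inord 0 by apply: val_inj; rewrite /= inordK.
- by have -> : Ordinal Ha = inord 1 by apply: val_inj; rewrite /= inordK.
- by have -> : Ordinal Ha = inord 2 by apply: val_inj; rewrite /= inordK.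
Qed.

Lemma enum3 : enum 'I_3 = [:: inord 0; inord 1; inord 2].
Proof. by apply: (inj_map val_inj); rewrite val_enum_ord /= !inordK. Qed.

Lemma forall_mkset3 X (P : nat -> bool) :
  [forall x in mkset3 X, P (nat_of_ord x)] = all P [seq x <- X | x < 4].
Proof.
apply/forallP/allP => [H y|H x].
  rewrite mem_filter => /andP [y4 yX].
  by have /implyP := H (Ordinal y4); rewrite inE; apply.
apply/implyP; rewrite inE => xX; apply: H; by rewrite mem_filter xX ltn_ord.
Qed.

Definition Ex3 n (s : seq nat) (x : nat) := ext_seq 3 n s x.+1 == (ext_seq 3 n s x).+1.

Definition C123 n X Y (i1 i2 i3 v1 v2 v3 : nat) : bool :=
  [&& i1 < i2 < i3, v1 < v2 < v3,
      all (Ex3 n [:: i1.+1; i2.+1; i3.+1]) [seq x <- X | x < 4] &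
      all (Ex3 n [:: v1.+1; v2.+1; v3.+1]) [seq x <- Y | x < 4]].

Definition C132 n X Y (i1 i2 i3 v1 v2 v3 : nat) : bool :=
  [&& i1 < i2 < i3, v1 < v3 < v2,
      all (Ex3 n [:: i1.+1; i2.+1; i3.+1]) [seq x <- X | x < 4] &
      all (Ex3 n [:: v1.+1; v3.+1; v2.+1]) [seq x <- Y | x < 4]].

Lemma inord_neq (a b : nat) : a < 3 -> b < 3 -> a != b -> (inord a : 'I_3) != inord b.
Proof. by move=> ha hb ab; rewrite -val_eqE /= !inordK. Qed.

Lemma s132_0 : s132 (inord 0) = inord 0.
Proof. by rewrite /s132 tpermD // inord_neq. Qed.
Lemma s132_1 : s132 (inord 1) = inord 2.
Proof. by rewrite /s132 tpermL. Qed.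
Lemma s132_2 : s132 (inord 2) = inord 1.
Proof. by rewrite /s132 tpermR. Qed.
Lemma s132_inv : (s132^-1)%g = s132.
Proof. by rewrite /s132 tpermV. Qed.

Lemma inc3 n (ii : {ffun 'I_3 -> 'I_n}) :
  [forall a : 'I_3, forall b : 'I_3, (a < b) ==> (ii a < ii b)] =
  (ii (inord 0) < ii (inord 1) < ii (inord 2)).
Proof.
rewrite forall3 !forall3 !inordK //=.
move: (nat_of_ord (ii (inord 0))) (nat_of_ord (ii (inord 1))) (nat_of_ord (ii (inord 2))) => a b c.
apply/idP/idP; lia.
Qed.

Lemma occ123 n (pi : 'S_n) X Y (ii : {ffun 'I_3 -> 'I_n}) :
  @occurrence n pi (mk3 s123 X Y) ii =
  C123 n X Y (ii (inord 0)) (ii (inord 1)) (ii (inord 2))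
    (pi (ii (inord 0))) (pi (ii (inord 1))) (pi (ii (inord 2))).
Proof.
rewrite /occurrence /C123 /mk3 /= inc3.
have Hiso : [forall a : 'I_3, forall b : 'I_3, (pi (ii a) < pi (ii b)) == (s123 a < s123 b)] =
   (pi (ii (inord 0)) < pi (ii (inord 1)) < pi (ii (inord 2))).
  rewrite forall3 !forall3 /s123 !perm1 !inordK //=.
  move: (nat_of_ord (pi (ii (inord 0)))) (nat_of_ord (pi (ii (inord 1)))) (nat_of_ord (pi (ii (inord 2)))) => a b c.
  apply/idP/idP; lia.
rewrite Hiso; case: (boolP (pi (ii (inord 0)) < pi (ii (inord 1)) < pi (ii (inord 2)))) => H; last by [].
have H' : [forall a : 'I_3, forall b : 'I_3, (pi (ii a) < pi (ii b)) == (s123 a < s123 b)] by rewrite Hiso.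
rewrite (sort_js (iso_iff H')) /s123 invg1 !enum3 /= !perm1.
by rewrite (forall_mkset3 X (Ex3 n _)) (forall_mkset3 Y (Ex3 n _)).
Qed.

Lemma occ132 n (pi : 'S_n) X Y (ii : {ffun 'I_3 -> 'I_n}) :
  @occurrence n pi (mk3 s132 X Y) ii =
  C132 n X Y (ii (inord 0)) (ii (inord 1)) (ii (inord 2))
    (pi (ii (inord 0))) (pi (ii (inord 1))) (pi (ii (inord 2))).
Proof.
rewrite /occurrence /C132 /mk3 /= inc3.
have Hiso : [forall a : 'I_3, forall b : 'I_3, (pi (ii a) < pi (ii b)) == (s132 a < s132 b)] =
   (pi (ii (inord 0)) < pi (ii (inord 2)) < pi (ii (inord 1))).
  rewrite forall3 !forall3 s132_0 s132_1 s132_2 !inordK //=.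
  move: (nat_of_ord (pi (ii (inord 0)))) (nat_of_ord (pi (ii (inord 1)))) (nat_of_ord (pi (ii (inord 2)))) => a b c.
  apply/idP/idP; lia.
rewrite Hiso; case: (boolP (pi (ii (inord 0)) < pi (ii (inord 2)) < pi (ii (inord 1)))) => H; last by [].
have H' : [forall a : 'I_3, forall b : 'I_3, (pi (ii a) < pi (ii b)) == (s132 a < s132 b)] by rewrite Hiso.
rewrite (sort_js (iso_iff H')) s132_inv !enum3 /= s132_0 s132_1 s132_2.
by rewrite (forall_mkset3 X (Ex3 n _)) (forall_mkset3 Y (Ex3 n _)).
Qed.

Lemma ffun3 n (i1 i2 i3 : 'I_n) : exists ii : {ffun 'I_3 -> 'I_n},
  [/\ ii (inord 0) = i1, ii (inord 1) = i2 & ii (inord 2) = i3].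
Proof.
exists [ffun a : 'I_3 => if nat_of_ord a == 0 then i1 else if nat_of_ord a == 1 then i2 else i3].
by rewrite !ffunE !inordK.
Qed.

Lemma cont123 n (pi : 'S_n) X Y :
  contains pi (mk3 s123 X Y) =
  [exists i1 : 'I_n, exists i2 : 'I_n, exists i3 : 'I_n,
     C123 n X Y i1 i2 i3 (pi i1) (pi i2) (pi i3)].
Proof.
apply/existsP/existsP => [[ii H]|[i1 /existsP [i2 /existsP [i3 H]]]].
  exists (ii (inord 0)); apply/existsP; exists (ii (inord 1)); apply/existsP; exists (ii (inord 2)).
  by rewrite -occ123.
have [ii [E1 E2 E3]] := ffun3 i1 i2 i3.
by exists ii; rewrite occ123 E1 E2 E3.
Qed.

Lemma cont132 n (pi : 'S_n) X Y :
  contains pi (mk3 s132 X Y) =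
  [exists i1 : 'I_n, exists i2 : 'I_n, exists i3 : 'I_n,
     C132 n X Y i1 i2 i3 (pi i1) (pi i2) (pi i3)].
Proof.
apply/existsP/existsP => [[ii H]|[i1 /existsP [i2 /existsP [i3 H]]]].
  exists (ii (inord 0)); apply/existsP; exists (ii (inord 1)); apply/existsP; exists (ii (inord 2)).
  by rewrite -occ132.
have [ii [E1 E2 E3]] := ffun3 i1 i2 i3.
by exists ii; rewrite occ132 E1 E2 E3.
Qed.

Lemma av_from n (p : bvpat) :
  #|[set pi : 'S_n | contains pi p]| = (n - 2)`! -> avoiders_count p n = n`! - (n - 2)`!.
Proof.
move=> H; rewrite /avoiders_count -H.
have E : [set pi : 'S_n | ~~ contains pi p] = ~: [set pi | contains pi p].
  by apply/setP => pi; rewrite !inE.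
by rewrite E -(card_Sn n) -(cardsC [set pi : 'S_n | contains pi p]) addKn.
Qed.

Lemma drive n p m r (S : 'I_m -> seq (nat * nat)) :
  m * (n - r)`! = (n - 2)`! ->
  (forall t, validN n (S t)) -> (forall t, size (S t) = r) ->
  (forall (pi : 'S_n) t t', pinnedN pi (S t) -> pinnedN pi (S t') -> t = t') ->
  (forall pi : 'S_n, contains pi p -> [exists t, pinnedN pi (S t)]) ->
  (forall pi : 'S_n, [exists t, pinnedN pi (S t)] -> contains pi p) ->
  avoiders_count p n = n`! - (n - 2)`!.
Proof.
move=> Ha Hv Hs Hu H1 H2; apply: av_from; rewrite -Ha -(card_famP Hv Hs Hu).
by apply: eq_card => pi; rewrite !inE; apply/idP/idP => [/H1|/H2].
Qed.

Lemma ex_ord m x : x < m -> {t : 'I_m | nat_of_ord t = x}.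
Proof. by move=> H; exists (Ordinal H). Qed.
Lemma ex_pos n k : k < n -> exists w : 'I_n, nat_of_ord w = k.
Proof. by move=> H; exists (Ordinal H). Qed.
Lemma ex_val n (pi : 'S_n) v : v < n -> exists w : 'I_n, nat_of_ord (pi w) = v.
Proof. by move=> H; exists (pi^-1 (Ordinal H))%g; rewrite permKV. Qed.

Definition injtag n (x y : 'I_n) := True.
Lemma inj_fact n (pi : 'S_n) (x y : 'I_n) :
  [/\ injtag x y, x < n, pi x < n, (y < n) && (pi y < n) &
  ((nat_of_ord x = y /\ nat_of_ord (pi x) = pi y) \/
   (nat_of_ord x <> y /\ nat_of_ord (pi x) <> pi y))].
Proof.
split => //; first by rewrite !ltn_ord.
case: (eqVneq x y) => [->|xy]; [by left|right].
split; first by move=> E; move/eqP: xy; apply; apply: val_inj.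
by move=> E; move/eqP: xy; apply; apply: (@perm_inj _ pi); apply: val_inj.
Qed.

Ltac tryadd pi x y :=
  assert_fails (constr_eq x y);
  lazymatch goal with
  | _ : injtag x y |- _ => fail
  | _ : injtag y x |- _ => fail
  | _ => case: (inj_fact pi x y) => ? ? ? ? ?
  end.

Ltac all_inj pi n :=
  repeat match goal with x : ?T1, y : ?T2 |- _ => tryadd pi x y end.

Ltac same_inj pi :=
  repeat match goal with
  | H1 : nat_of_ord (pi ?x) = ?v, H2 : nat_of_ord (pi ?y) = ?v |- _ => tryadd pi x y
  | H1 : nat_of_ord ?x = ?v, H2 : nat_of_ord ?y = ?v |- _ => is_var x; is_var y; tryadd pi x y
  end.

Ltac get2 H := move: H; rewrite /pinnedN /= => H; case/andP: H => /existsP [x1 /andP [/eqP a1 /eqP b1]] /andP [/existsP [x2 /andP [/eqP a2 /eqP b2]] _].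
Ltac get3 H := move: H; rewrite /pinnedN /= => H; case/andP: H => /existsP [x1 /andP [/eqP a1 /eqP b1]] /andP [/existsP [x2 /andP [/eqP a2 /eqP b2]] /andP [/existsP [x3 /andP [/eqP a3 /eqP b3]] _]].
Ltac get3' H := move: H; rewrite /pinnedN /= => H; case/andP: H => /existsP [y1 /andP [/eqP c1 /eqP d1]] /andP [/existsP [y2 /andP [/eqP c2 /eqP d2]] /andP [/existsP [y3 /andP [/eqP c3 /eqP d3]] _]].

Ltac solve_pins i1 i2 i3 :=
  rewrite /pinnedN /=; repeat (apply/andP; split); try done;
  (apply/existsP; first [exists i1; lia | exists i2; lia | exists i3; lia]).

Ltac fin3 pi n := all_inj pi n; rewrite /C123 /C132 /Ex3 /ext_seq /=; lia.

Ltac fwdI c := move=> pi; rewrite c => /existsP [i1 /existsP [i2 /existsP [i3]]];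
  rewrite /C123 /C132 /Ex3 /ext_seq /= => ?;
  have := ltn_ord i1; have := ltn_ord i2; have := ltn_ord i3;
  have := ltn_ord (pi i1); have := ltn_ord (pi i2); have := ltn_ord (pi i3); move=> ? ? ? ? ? ?.

Ltac wit3 a b c := apply/existsP; exists a; apply/existsP; exists b; apply/existsP; exists c.

Ltac validK := move=> t; rewrite /validN /= ?inE; have := ltn_ord t; lia.
Ltac arithK n := (have -> : n - 2 = (n - 3).+1 by lia); exact: (esym (factS _)).

Lemma b1 n : 3 <= n -> avoiders_count (mk3 s123 [:: 0;1] [:: 0;1]) n = n`! - (n - 2)`!.
Proof.
move=> Hn; apply: (drive (m := 1) (r := 2) (S := fun _ => [:: (0, 0); (1, 1)])).
- by rewrite mul1n.
- move=> t; rewrite /validN /= ?inE; lia.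
- by [].
- by move=> pi t t' _ _; rewrite (ord1 t) (ord1 t').
- fwdI cont123.
  apply/existsP; exists ord0; solve_pins i1 i2 i3.
- move=> pi /existsP [t H]; get2 H.
  have [w Hw] := @ex_pos n (2) ltac:(lia).
  rewrite cont123; wit3 x1 x2 w; fin3 pi n.
Qed.

Lemma b2 n : 3 <= n -> avoiders_count (mk3 s123 [:: 0;1] [:: 0;1;2]) n = n`! - (n - 2)`!.
Proof.
move=> Hn; apply: (drive (m := 1) (r := 2) (S := fun _ => [:: (0, 0); (1, 1)])).
- by rewrite mul1n.
- move=> t; rewrite /validN /= ?inE; lia.
- by [].
- by move=> pi t t' _ _; rewrite (ord1 t) (ord1 t').
- fwdI cont123.
  apply/existsP; exists ord0; solve_pins i1 i2 i3.
- move=> pi /existsP [t H]; get2 H.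
  have [w Hw] := @ex_val n pi (2) ltac:(lia).
  rewrite cont123; wit3 x1 x2 w; fin3 pi n.
Qed.

Lemma b3 n : 3 <= n -> avoiders_count (mk3 s123 [:: 0;1] [:: 0;1;3]) n = n`! - (n - 2)`!.
Proof.
move=> Hn; apply: (drive (m := 1) (r := 2) (S := fun _ => [:: (0, 0); (1, 1)])).
- by rewrite mul1n.
- move=> t; rewrite /validN /= ?inE; lia.
- by [].
- by move=> pi t t' _ _; rewrite (ord1 t) (ord1 t').
- fwdI cont123.
  apply/existsP; exists ord0; solve_pins i1 i2 i3.
- move=> pi /existsP [t H]; get2 H.
  have [w Hw] := @ex_val n pi (n - 1) ltac:(lia).
  rewrite cont123; wit3 x1 x2 w; fin3 pi n.
Qed.

Lemma b4 n : 3 <= n -> avoiders_count (mk3 s123 [:: 0;1] [:: 0;2;3]) n = n`! - (n - 2)`!.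
Proof.
move=> Hn; apply: (drive (m := 1) (r := 2) (S := fun _ => [:: (0, 0); (1, n - 2)])).
- by rewrite mul1n.
- move=> t; rewrite /validN /= ?inE; lia.
- by [].
- by move=> pi t t' _ _; rewrite (ord1 t) (ord1 t').
- fwdI cont123.
  apply/existsP; exists ord0; solve_pins i1 i2 i3.
- move=> pi /existsP [t H]; get2 H.
  have [w Hw] := @ex_val n pi (n - 1) ltac:(lia).
  rewrite cont123; wit3 x1 x2 w; fin3 pi n.
Qed.

Lemma b5 n : 3 <= n -> avoiders_count (mk3 s123 [:: 0;1] [:: 1;2;3]) n = n`! - (n - 2)`!.
Proof.
move=> Hn; apply: (drive (m := 1) (r := 2) (S := fun _ => [:: (0, n - 3); (1, n - 2)])).
- by rewrite mul1n.
- move=> t; rewrite /validN /= ?inE; lia.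
- by [].
- by move=> pi t t' _ _; rewrite (ord1 t) (ord1 t').
- fwdI cont123.
  apply/existsP; exists ord0; solve_pins i1 i2 i3.
- move=> pi /existsP [t H]; get2 H.
  have [w Hw] := @ex_val n pi (n - 1) ltac:(lia).
  rewrite cont123; wit3 x1 x2 w; fin3 pi n.
Qed.

Lemma b6 n : 3 <= n -> avoiders_count (mk3 s123 [:: 0;2] [:: 0;1;2]) n = n`! - (n - 2)`!.
Proof.
move=> Hn; apply: (drive (m := n - 2) (r := 3) (S := fun t => [:: (0, 0); (t.+1, 1); (t.+2, 2)])).
- arithK n.
- validK.
- by [].
- move=> pi t t' H H'; get3 H; get3' H'; tryadd pi x2 y2; apply: ord_inj; lia.
- fwdI cont123.
  have [t Ht] := @ex_ord (n - 2) (i2.-1) ltac:(lia).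
  apply/existsP; exists t; solve_pins i1 i2 i3.
- move=> pi /existsP [t H]; get3 H.
  rewrite cont123; wit3 x1 x2 x3; fin3 pi n.
Qed.

Lemma b7 n : 3 <= n -> avoiders_count (mk3 s123 [:: 0;2] [:: 0;1;3]) n = n`! - (n - 2)`!.
Proof.
move=> Hn; apply: (drive (m := n - 2) (r := 3) (S := fun t => [:: (0, 0); (t.+1, 1); (t.+2, n - 1)])).
- arithK n.
- validK.
- by [].
- move=> pi t t' H H'; get3 H; get3' H'; tryadd pi x2 y2; apply: ord_inj; lia.
- fwdI cont123.
  have [t Ht] := @ex_ord (n - 2) (i2.-1) ltac:(lia).
  apply/existsP; exists t; solve_pins i1 i2 i3.
- move=> pi /existsP [t H]; get3 H.
  rewrite cont123; wit3 x1 x2 x3; fin3 pi n.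
Qed.

Lemma b8 n : 3 <= n -> avoiders_count (mk3 s123 [:: 0;2] [:: 0;2;3]) n = n`! - (n - 2)`!.
Proof.
move=> Hn; apply: (drive (m := n - 2) (r := 3) (S := fun t => [:: (0, 0); (t.+1, n - 2); (t.+2, n - 1)])).
- arithK n.
- validK.
- by [].
- move=> pi t t' H H'; get3 H; get3' H'; tryadd pi x2 y2; apply: ord_inj; lia.
- fwdI cont123.
  have [t Ht] := @ex_ord (n - 2) (i2.-1) ltac:(lia).
  apply/existsP; exists t; solve_pins i1 i2 i3.
- move=> pi /existsP [t H]; get3 H.
  rewrite cont123; wit3 x1 x2 x3; fin3 pi n.
Qed.

Lemma b9 n : 3 <= n -> avoiders_count (mk3 s123 [:: 0;2] [:: 1;2;3]) n = n`! - (n - 2)`!.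
Proof.
move=> Hn; apply: (drive (m := n - 2) (r := 3) (S := fun t => [:: (0, n - 3); (t.+1, n - 2); (t.+2, n - 1)])).
- arithK n.
- validK.
- by [].
- move=> pi t t' H H'; get3 H; get3' H'; tryadd pi x2 y2; apply: ord_inj; lia.
- fwdI cont123.
  have [t Ht] := @ex_ord (n - 2) (i2.-1) ltac:(lia).
  apply/existsP; exists t; solve_pins i1 i2 i3.
- move=> pi /existsP [t H]; get3 H.
  rewrite cont123; wit3 x1 x2 x3; fin3 pi n.
Qed.

Lemma b10 n : 3 <= n -> avoiders_count (mk3 s123 [:: 1;2] [:: 0;1;2]) n = n`! - (n - 2)`!.
Proof.
move=> Hn; apply: (drive (m := n - 2) (r := 3) (S := fun t => [:: ((t : nat), 0); (t.+1, 1); (t.+2, 2)])).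
- arithK n.
- validK.
- by [].
- move=> pi t t' H H'; get3 H; get3' H'; tryadd pi x2 y2; apply: ord_inj; lia.
- fwdI cont123.
  have [t Ht] := @ex_ord (n - 2) (nat_of_ord i1) ltac:(lia).
  apply/existsP; exists t; solve_pins i1 i2 i3.
- move=> pi /existsP [t H]; get3 H.
  rewrite cont123; wit3 x1 x2 x3; fin3 pi n.
Qed.

Lemma b11 n : 3 <= n -> avoiders_count (mk3 s123 [:: 1;2] [:: 0;1;3]) n = n`! - (n - 2)`!.
Proof.
move=> Hn; apply: (drive (m := n - 2) (r := 3) (S := fun t => [:: ((t : nat), 0); (t.+1, 1); (t.+2, n - 1)])).
- arithK n.
- validK.
- by [].
- move=> pi t t' H H'; get3 H; get3' H'; tryadd pi x2 y2; apply: ord_inj; lia.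
- fwdI cont123.
  have [t Ht] := @ex_ord (n - 2) (nat_of_ord i1) ltac:(lia).
  apply/existsP; exists t; solve_pins i1 i2 i3.
- move=> pi /existsP [t H]; get3 H.
  rewrite cont123; wit3 x1 x2 x3; fin3 pi n.
Qed.

Lemma b12 n : 3 <= n -> avoiders_count (mk3 s123 [:: 0;1;2] [:: 0;3]) n = n`! - (n - 2)`!.
Proof.
move=> Hn; apply: (drive (m := 1) (r := 2) (S := fun _ => [:: (0, 0); (2, n - 1)])).
- by rewrite mul1n.
- move=> t; rewrite /validN /= ?inE; lia.
- by [].
- by move=> pi t t' _ _; rewrite (ord1 t) (ord1 t').
- fwdI cont123.
  apply/existsP; exists ord0; solve_pins i1 i2 i3.
- move=> pi /existsP [t H]; get2 H.
  have [w Hw] := @ex_pos n (1) ltac:(lia).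
  rewrite cont123; wit3 x1 w x2; fin3 pi n.
Qed.

Lemma b13 n : 3 <= n -> avoiders_count (mk3 s123 [:: 0;3] [:: 0;3]) n = n`! - (n - 2)`!.
Proof.
move=> Hn; apply: (drive (m := 1) (r := 2) (S := fun _ => [:: (0, 0); (n - 1, n - 1)])).
- by rewrite mul1n.
- move=> t; rewrite /validN /= ?inE; lia.
- by [].
- by move=> pi t t' _ _; rewrite (ord1 t) (ord1 t').
- fwdI cont123.
  apply/existsP; exists ord0; solve_pins i1 i2 i3.
- move=> pi /existsP [t H]; get2 H.
  have [w Hw] := @ex_pos n (1) ltac:(lia).
  rewrite cont123; wit3 x1 w x2; fin3 pi n.
Qed.

Lemma b14 n : 3 <= n -> avoiders_count (mk3 s123 [:: 0;3] [:: 0;1;3]) n = n`! - (n - 2)`!.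
Proof.
move=> Hn; apply: (drive (m := 1) (r := 2) (S := fun _ => [:: (0, 0); (n - 1, n - 1)])).
- by rewrite mul1n.
- move=> t; rewrite /validN /= ?inE; lia.
- by [].
- by move=> pi t t' _ _; rewrite (ord1 t) (ord1 t').
- fwdI cont123.
  apply/existsP; exists ord0; solve_pins i1 i2 i3.
- move=> pi /existsP [t H]; get2 H.
  have [w Hw] := @ex_val n pi (1) ltac:(lia).
  rewrite cont123; wit3 x1 w x2; fin3 pi n.
Qed.

Lemma b15 n : 3 <= n -> avoiders_count (mk3 s132 [:: 0;1] [:: 0;1;2]) n = n`! - (n - 2)`!.
Proof.
move=> Hn; apply: (drive (m := 1) (r := 2) (S := fun _ => [:: (0, 0); (1, 2)])).
- by rewrite mul1n.
- move=> t; rewrite /validN /= ?inE; lia.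
- by [].
- by move=> pi t t' _ _; rewrite (ord1 t) (ord1 t').
- fwdI cont132.
  apply/existsP; exists ord0; solve_pins i1 i2 i3.
- move=> pi /existsP [t H]; get2 H.
  have [w Hw] := @ex_val n pi (1) ltac:(lia).
  rewrite cont132; wit3 x1 x2 w; fin3 pi n.
Qed.

Lemma b16 n : 3 <= n -> avoiders_count (mk3 s132 [:: 0;1] [:: 0;3]) n = n`! - (n - 2)`!.
Proof.
move=> Hn; apply: (drive (m := 1) (r := 2) (S := fun _ => [:: (0, 0); (1, n - 1)])).
- by rewrite mul1n.
- move=> t; rewrite /validN /= ?inE; lia.
- by [].
- by move=> pi t t' _ _; rewrite (ord1 t) (ord1 t').
- fwdI cont132.
  apply/existsP; exists ord0; solve_pins i1 i2 i3.
- move=> pi /existsP [t H]; get2 H.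
  have [w Hw] := @ex_pos n (2) ltac:(lia).
  rewrite cont132; wit3 x1 x2 w; fin3 pi n.
Qed.

Lemma b17 n : 3 <= n -> avoiders_count (mk3 s132 [:: 0;1] [:: 0;1;3]) n = n`! - (n - 2)`!.
Proof.
move=> Hn; apply: (drive (m := 1) (r := 2) (S := fun _ => [:: (0, 0); (1, n - 1)])).
- by rewrite mul1n.
- move=> t; rewrite /validN /= ?inE; lia.
- by [].
- by move=> pi t t' _ _; rewrite (ord1 t) (ord1 t').
- fwdI cont132.
  apply/existsP; exists ord0; solve_pins i1 i2 i3.
- move=> pi /existsP [t H]; get2 H.
  have [w Hw] := @ex_val n pi (1) ltac:(lia).
  rewrite cont132; wit3 x1 x2 w; fin3 pi n.
Qed.

Lemma b18 n : 3 <= n -> avoiders_count (mk3 s132 [:: 0;1] [:: 0;2;3]) n = n`! - (n - 2)`!.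
Proof.
move=> Hn; apply: (drive (m := 1) (r := 2) (S := fun _ => [:: (0, 0); (1, n - 1)])).
- by rewrite mul1n.
- move=> t; rewrite /validN /= ?inE; lia.
- by [].
- by move=> pi t t' _ _; rewrite (ord1 t) (ord1 t').
- fwdI cont132.
  apply/existsP; exists ord0; solve_pins i1 i2 i3.
- move=> pi /existsP [t H]; get2 H.
  have [w Hw] := @ex_val n pi (n - 2) ltac:(lia).
  rewrite cont132; wit3 x1 x2 w; fin3 pi n.
Qed.

Lemma b19 n : 3 <= n -> avoiders_count (mk3 s132 [:: 0;1] [:: 1;2;3]) n = n`! - (n - 2)`!.
Proof.
move=> Hn; apply: (drive (m := 1) (r := 2) (S := fun _ => [:: (0, n - 3); (1, n - 1)])).
- by rewrite mul1n.
- move=> t; rewrite /validN /= ?inE; lia.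
- by [].
- by move=> pi t t' _ _; rewrite (ord1 t) (ord1 t').
- fwdI cont132.
  apply/existsP; exists ord0; solve_pins i1 i2 i3.
- move=> pi /existsP [t H]; get2 H.
  have [w Hw] := @ex_val n pi (n - 2) ltac:(lia).
  rewrite cont132; wit3 x1 x2 w; fin3 pi n.
Qed.

Lemma b20 n : 3 <= n -> avoiders_count (mk3 s132 [:: 0;2] [:: 0;1;2]) n = n`! - (n - 2)`!.
Proof.
move=> Hn; apply: (drive (m := n - 2) (r := 3) (S := fun t => [:: (0, 0); (t.+1, 2); (t.+2, 1)])).
- arithK n.
- validK.
- by [].
- move=> pi t t' H H'; get3 H; get3' H'; tryadd pi x2 y2; apply: ord_inj; lia.
- fwdI cont132.
  have [t Ht] := @ex_ord (n - 2) (i2.-1) ltac:(lia).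
  apply/existsP; exists t; solve_pins i1 i2 i3.
- move=> pi /existsP [t H]; get3 H.
  rewrite cont132; wit3 x1 x2 x3; fin3 pi n.
Qed.

Lemma b21 n : 3 <= n -> avoiders_count (mk3 s132 [:: 0;2] [:: 0;1;3]) n = n`! - (n - 2)`!.
Proof.
move=> Hn; apply: (drive (m := n - 2) (r := 3) (S := fun t => [:: (0, 0); (t.+1, n - 1); (t.+2, 1)])).
- arithK n.
- validK.
- by [].
- move=> pi t t' H H'; get3 H; get3' H'; tryadd pi x2 y2; apply: ord_inj; lia.
- fwdI cont132.
  have [t Ht] := @ex_ord (n - 2) (i2.-1) ltac:(lia).
  apply/existsP; exists t; solve_pins i1 i2 i3.
- move=> pi /existsP [t H]; get3 H.
  rewrite cont132; wit3 x1 x2 x3; fin3 pi n.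
Qed.

Lemma b22 n : 3 <= n -> avoiders_count (mk3 s132 [:: 0;2] [:: 0;2;3]) n = n`! - (n - 2)`!.
Proof.
move=> Hn; apply: (drive (m := n - 2) (r := 3) (S := fun t => [:: (0, 0); (t.+1, n - 1); (t.+2, n - 2)])).
- arithK n.
- validK.
- by [].
- move=> pi t t' H H'; get3 H; get3' H'; tryadd pi x2 y2; apply: ord_inj; lia.
- fwdI cont132.
  have [t Ht] := @ex_ord (n - 2) (i2.-1) ltac:(lia).
  apply/existsP; exists t; solve_pins i1 i2 i3.
- move=> pi /existsP [t H]; get3 H.
  rewrite cont132; wit3 x1 x2 x3; fin3 pi n.
Qed.

Lemma b23 n : 3 <= n -> avoiders_count (mk3 s132 [:: 0;2] [:: 1;2;3]) n = n`! - (n - 2)`!.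
Proof.
move=> Hn; apply: (drive (m := n - 2) (r := 3) (S := fun t => [:: (0, n - 3); (t.+1, n - 1); (t.+2, n - 2)])).
- arithK n.
- validK.
- by [].
- move=> pi t t' H H'; get3 H; get3' H'; tryadd pi x2 y2; apply: ord_inj; lia.
- fwdI cont132.
  have [t Ht] := @ex_ord (n - 2) (i2.-1) ltac:(lia).
  apply/existsP; exists t; solve_pins i1 i2 i3.
- move=> pi /existsP [t H]; get3 H.
  rewrite cont132; wit3 x1 x2 x3; fin3 pi n.
Qed.

Lemma b24 n : 3 <= n -> avoiders_count (mk3 s132 [:: 1;2] [:: 0;1;2]) n = n`! - (n - 2)`!.
Proof.
move=> Hn; apply: (drive (m := n - 2) (r := 3) (S := fun t => [:: ((t : nat), 0); (t.+1, 2); (t.+2, 1)])).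
- arithK n.
- validK.
- by [].
- move=> pi t t' H H'; get3 H; get3' H'; tryadd pi x2 y2; apply: ord_inj; lia.
- fwdI cont132.
  have [t Ht] := @ex_ord (n - 2) (nat_of_ord i1) ltac:(lia).
  apply/existsP; exists t; solve_pins i1 i2 i3.
- move=> pi /existsP [t H]; get3 H.
  rewrite cont132; wit3 x1 x2 x3; fin3 pi n.
Qed.

Lemma b25 n : 3 <= n -> avoiders_count (mk3 s132 [:: 1;2] [:: 0;1;3]) n = n`! - (n - 2)`!.
Proof.
move=> Hn; apply: (drive (m := n - 2) (r := 3) (S := fun t => [:: ((t : nat), 0); (t.+1, n - 1); (t.+2, 1)])).
- arithK n.
- validK.
- by [].
- move=> pi t t' H H'; get3 H; get3' H'; tryadd pi x2 y2; apply: ord_inj; lia.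
- fwdI cont132.
  have [t Ht] := @ex_ord (n - 2) (nat_of_ord i1) ltac:(lia).
  apply/existsP; exists t; solve_pins i1 i2 i3.
- move=> pi /existsP [t H]; get3 H.
  rewrite cont132; wit3 x1 x2 x3; fin3 pi n.
Qed.

Lemma b26 n : 3 <= n -> avoiders_count (mk3 s132 [:: 1;2] [:: 0;2;3]) n = n`! - (n - 2)`!.
Proof.
move=> Hn; apply: (drive (m := n - 2) (r := 3) (S := fun t => [:: ((t : nat), 0); (t.+1, n - 1); (t.+2, n - 2)])).
- arithK n.
- validK.
- by [].
- move=> pi t t' H H'; get3 H; get3' H'; tryadd pi x2 y2; apply: ord_inj; lia.
- fwdI cont132.
  have [t Ht] := @ex_ord (n - 2) (nat_of_ord i1) ltac:(lia).
  apply/existsP; exists t; solve_pins i1 i2 i3.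
- move=> pi /existsP [t H]; get3 H.
  rewrite cont132; wit3 x1 x2 x3; fin3 pi n.
Qed.

Lemma b27 n : 3 <= n -> avoiders_count (mk3 s132 [:: 1;2] [:: 1;2;3]) n = n`! - (n - 2)`!.
Proof.
move=> Hn; apply: (drive (m := n - 2) (r := 3) (S := fun t => [:: ((t : nat), n - 3); (t.+1, n - 1); (t.+2, n - 2)])).
- arithK n.
- validK.
- by [].
- move=> pi t t' H H'; get3 H; get3' H'; tryadd pi x2 y2; apply: ord_inj; lia.
- fwdI cont132.
  have [t Ht] := @ex_ord (n - 2) (nat_of_ord i1) ltac:(lia).
  apply/existsP; exists t; solve_pins i1 i2 i3.
- move=> pi /existsP [t H]; get3 H.
  rewrite cont132; wit3 x1 x2 x3; fin3 pi n.
Qed.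

Lemma b28 n : 3 <= n -> avoiders_count (mk3 s132 [:: 0;1;2] [:: 0;3]) n = n`! - (n - 2)`!.
Proof.
move=> Hn; apply: (drive (m := 1) (r := 2) (S := fun _ => [:: (0, 0); (1, n - 1)])).
- by rewrite mul1n.
- move=> t; rewrite /validN /= ?inE; lia.
- by [].
- by move=> pi t t' _ _; rewrite (ord1 t) (ord1 t').
- fwdI cont132.
  apply/existsP; exists ord0; solve_pins i1 i2 i3.
- move=> pi /existsP [t H]; get2 H.
  have [w Hw] := @ex_pos n (2) ltac:(lia).
  rewrite cont132; wit3 x1 x2 w; fin3 pi n.
Qed.

Lemma b29 n : 3 <= n -> avoiders_count (mk3 s132 [:: 0;1;2] [:: 1;3]) n = n`! - (n - 2)`!.
Proof.
move=> Hn; apply: (drive (m := n - 2) (r := 3) (S := fun t => [:: (1, n - 1); (0, (t : nat)); (2, t.+1)])).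
- arithK n.
- validK.
- by [].
- move=> pi t t' H H'; get3 H; get3' H'; tryadd pi x2 y2; apply: ord_inj; lia.
- fwdI cont132.
  have [t Ht] := @ex_ord (n - 2) (nat_of_ord (pi i1)) ltac:(lia).
  apply/existsP; exists t; solve_pins i1 i2 i3.
- move=> pi /existsP [t H]; get3 H.
  rewrite cont132; wit3 x2 x1 x3; fin3 pi n.
Qed.

Lemma b30 n : 3 <= n -> avoiders_count (mk3 s132 [:: 0;1;2] [:: 2;3]) n = n`! - (n - 2)`!.
Proof.
move=> Hn; apply: (drive (m := 1) (r := 2) (S := fun _ => [:: (1, n - 1); (2, n - 2)])).
- by rewrite mul1n.
- move=> t; rewrite /validN /= ?inE; lia.
- by [].
- by move=> pi t t' _ _; rewrite (ord1 t) (ord1 t').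
- fwdI cont132.
  apply/existsP; exists ord0; solve_pins i1 i2 i3.
- move=> pi /existsP [t H]; get2 H.
  have [w Hw] := @ex_pos n (0) ltac:(lia).
  rewrite cont132; wit3 w x1 x2; fin3 pi n.
Qed.

Lemma b31 n : 3 <= n -> avoiders_count (mk3 s132 [:: 0;3] [:: 0;1;3]) n = n`! - (n - 2)`!.
Proof.
move=> Hn; apply: (drive (m := 1) (r := 2) (S := fun _ => [:: (0, 0); (n - 1, 1)])).
- by rewrite mul1n.
- move=> t; rewrite /validN /= ?inE; lia.
- by [].
- by move=> pi t t' _ _; rewrite (ord1 t) (ord1 t').
- fwdI cont132.
  apply/existsP; exists ord0; solve_pins i1 i2 i3.
- move=> pi /existsP [t H]; get2 H.
  have [w Hw] := @ex_val n pi (n - 1) ltac:(lia).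
  rewrite cont132; wit3 x1 w x2; fin3 pi n.
Qed.

Lemma b32 n : 3 <= n -> avoiders_count (mk3 s132 [:: 0;3] [:: 0;2;3]) n = n`! - (n - 2)`!.
Proof.
move=> Hn; apply: (drive (m := 1) (r := 2) (S := fun _ => [:: (0, 0); (n - 1, n - 2)])).
- by rewrite mul1n.
- move=> t; rewrite /validN /= ?inE; lia.
- by [].
- by move=> pi t t' _ _; rewrite (ord1 t) (ord1 t').
- fwdI cont132.
  apply/existsP; exists ord0; solve_pins i1 i2 i3.
- move=> pi /existsP [t H]; get2 H.
  have [w Hw] := @ex_val n pi (n - 1) ltac:(lia).
  rewrite cont132; wit3 x1 w x2; fin3 pi n.
Qed.

Lemma b33 n : 3 <= n -> avoiders_count (mk3 s132 [:: 0;3] [:: 1;2;3]) n = n`! - (n - 2)`!.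
Proof.
move=> Hn; apply: (drive (m := 1) (r := 2) (S := fun _ => [:: (0, n - 3); (n - 1, n - 2)])).
- by rewrite mul1n.
- move=> t; rewrite /validN /= ?inE; lia.
- by [].
- by move=> pi t t' _ _; rewrite (ord1 t) (ord1 t').
- fwdI cont132.
  apply/existsP; exists ord0; solve_pins i1 i2 i3.
- move=> pi /existsP [t H]; get2 H.
  have [w Hw] := @ex_val n pi (n - 1) ltac:(lia).
  rewrite cont132; wit3 x1 w x2; fin3 pi n.
Qed.

Lemma b34 n : 3 <= n -> avoiders_count (mk3 s132 [:: 1;3] [:: 0;1;3]) n = n`! - (n - 2)`!.
Proof.
move=> Hn; apply: (drive (m := n - 2) (r := 3) (S := fun t => [:: (n - 1, 1); ((t : nat), 0); (t.+1, n - 1)])).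
- arithK n.
- validK.
- by [].
- move=> pi t t' H H'; get3 H; get3' H'; tryadd pi x2 y2; apply: ord_inj; lia.
- fwdI cont132.
  have [t Ht] := @ex_ord (n - 2) (nat_of_ord i1) ltac:(lia).
  apply/existsP; exists t; solve_pins i1 i2 i3.
- move=> pi /existsP [t H]; get3 H.
  rewrite cont132; wit3 x2 x3 x1; fin3 pi n.
Qed.

Lemma b35 n : 3 <= n -> avoiders_count (mk3 s132 [:: 1;3] [:: 0;2;3]) n = n`! - (n - 2)`!.
Proof.
move=> Hn; apply: (drive (m := n - 2) (r := 3) (S := fun t => [:: (n - 1, n - 2); ((t : nat), 0); (t.+1, n - 1)])).
- arithK n.
- validK.
- by [].
- move=> pi t t' H H'; get3 H; get3' H'; tryadd pi x2 y2; apply: ord_inj; lia.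
- fwdI cont132.
  have [t Ht] := @ex_ord (n - 2) (nat_of_ord i1) ltac:(lia).
  apply/existsP; exists t; solve_pins i1 i2 i3.
- move=> pi /existsP [t H]; get3 H.
  rewrite cont132; wit3 x2 x3 x1; fin3 pi n.
Qed.

Lemma b36 n : 3 <= n -> avoiders_count (mk3 s132 [:: 1;3] [:: 1;2;3]) n = n`! - (n - 2)`!.
Proof.
move=> Hn; apply: (drive (m := n - 2) (r := 3) (S := fun t => [:: (n - 1, n - 2); ((t : nat), n - 3); (t.+1, n - 1)])).
- arithK n.
- validK.
- by [].
- move=> pi t t' H H'; get3 H; get3' H'; tryadd pi x2 y2; apply: ord_inj; lia.
- fwdI cont132.
  have [t Ht] := @ex_ord (n - 2) (nat_of_ord i1) ltac:(lia).
  apply/existsP; exists t; solve_pins i1 i2 i3.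
- move=> pi /existsP [t H]; get3 H.
  rewrite cont132; wit3 x2 x3 x1; fin3 pi n.
Qed.

Lemma b37 n : 3 <= n -> avoiders_count (mk3 s132 [:: 0;1;3] [:: 2;3]) n = n`! - (n - 2)`!.
Proof.
move=> Hn; apply: (drive (m := 1) (r := 2) (S := fun _ => [:: (1, n - 1); (n - 1, n - 2)])).
- by rewrite mul1n.
- move=> t; rewrite /validN /= ?inE; lia.
- by [].
- by move=> pi t t' _ _; rewrite (ord1 t) (ord1 t').
- fwdI cont132.
  apply/existsP; exists ord0; solve_pins i1 i2 i3.
- move=> pi /existsP [t H]; get2 H.
  have [w Hw] := @ex_pos n (0) ltac:(lia).
  rewrite cont132; wit3 w x1 x2; fin3 pi n.
Qed.

Lemma b38 n : 3 <= n -> avoiders_count (mk3 s132 [:: 2;3] [:: 2;3]) n = n`! - (n - 2)`!.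
Proof.
move=> Hn; apply: (drive (m := 1) (r := 2) (S := fun _ => [:: (n - 2, n - 1); (n - 1, n - 2)])).
- by rewrite mul1n.
- move=> t; rewrite /validN /= ?inE; lia.
- by [].
- by move=> pi t t' _ _; rewrite (ord1 t) (ord1 t').
- fwdI cont132.
  apply/existsP; exists ord0; solve_pins i1 i2 i3.
- move=> pi /existsP [t H]; get2 H.
  have [w Hw] := @ex_pos n (0) ltac:(lia).
  rewrite cont132; wit3 w x1 x2; fin3 pi n.
Qed.

Lemma b39 n : 3 <= n -> avoiders_count (mk3 s132 [:: 2;3] [:: 0;2;3]) n = n`! - (n - 2)`!.
Proof.
move=> Hn; apply: (drive (m := 1) (r := 2) (S := fun _ => [:: (n - 2, n - 1); (n - 1, n - 2)])).
- by rewrite mul1n.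
- move=> t; rewrite /validN /= ?inE; lia.
- by [].
- by move=> pi t t' _ _; rewrite (ord1 t) (ord1 t').
- fwdI cont132.
  apply/existsP; exists ord0; solve_pins i1 i2 i3.
- move=> pi /existsP [t H]; get2 H.
  have [w Hw] := @ex_val n pi (0) ltac:(lia).
  rewrite cont132; wit3 w x1 x2; fin3 pi n.
Qed.

Lemma b40 n : 3 <= n -> avoiders_count (mk3 s132 [:: 2;3] [:: 1;2;3]) n = n`! - (n - 2)`!.
Proof.
move=> Hn; apply: (drive (m := 1) (r := 2) (S := fun _ => [:: (n - 2, n - 1); (n - 1, n - 2)])).
- by rewrite mul1n.
- move=> t; rewrite /validN /= ?inE; lia.
- by [].
- by move=> pi t t' _ _; rewrite (ord1 t) (ord1 t').
- fwdI cont132.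
  apply/existsP; exists ord0; solve_pins i1 i2 i3.
- move=> pi /existsP [t H]; get2 H.
  have [w Hw] := @ex_val n pi (n - 3) ltac:(lia).
  rewrite cont132; wit3 w x1 x2; fin3 pi n.
Qed.

Unset Implicit Arguments.

Theorem mainTheorem19 (b p : bvpat) :
  List.In b base_pats -> in_symclass b p ->
  forall n : nat, 3 <= n -> avoiders_count p n = n`! - (n - 2)`!.
Proof.
move=> Hb Hs n Hn; rewrite (av_sym _ Hs); move: Hb; rewrite /base_pats => Hb.
case: Hb => [<-|Hb]; first exact: b1 Hn.
case: Hb => [<-|Hb]; first exact: b2 Hn.
case: Hb => [<-|Hb]; first exact: b3 Hn.
case: Hb => [<-|Hb]; first exact: b4 Hn.
case: Hb => [<-|Hb]; first exact: b5 Hn.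
case: Hb => [<-|Hb]; first exact: b6 Hn.
case: Hb => [<-|Hb]; first exact: b7 Hn.
case: Hb => [<-|Hb]; first exact: b8 Hn.
case: Hb => [<-|Hb]; first exact: b9 Hn.
case: Hb => [<-|Hb]; first exact: b10 Hn.
case: Hb => [<-|Hb]; first exact: b11 Hn.
case: Hb => [<-|Hb]; first exact: b12 Hn.
case: Hb => [<-|Hb]; first exact: b13 Hn.
case: Hb => [<-|Hb]; first exact: b14 Hn.
case: Hb => [<-|Hb]; first exact: b15 Hn.
case: Hb => [<-|Hb]; first exact: b16 Hn.
case: Hb => [<-|Hb]; first exact: b17 Hn.
case: Hb => [<-|Hb]; first exact: b18 Hn.
case: Hb => [<-|Hb]; first exact: b19 Hn.
case: Hb => [<-|Hb]; first exact: b20 Hn.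
case: Hb => [<-|Hb]; first exact: b21 Hn.
case: Hb => [<-|Hb]; first exact: b22 Hn.
case: Hb => [<-|Hb]; first exact: b23 Hn.
case: Hb => [<-|Hb]; first exact: b24 Hn.
case: Hb => [<-|Hb]; first exact: b25 Hn.
case: Hb => [<-|Hb]; first exact: b26 Hn.
case: Hb => [<-|Hb]; first exact: b27 Hn.
case: Hb => [<-|Hb]; first exact: b28 Hn.
case: Hb => [<-|Hb]; first exact: b29 Hn.
case: Hb => [<-|Hb]; first exact: b30 Hn.
case: Hb => [<-|Hb]; first exact: b31 Hn.
case: Hb => [<-|Hb]; first exact: b32 Hn.
case: Hb => [<-|Hb]; first exact: b33 Hn.
case: Hb => [<-|Hb]; first exact: b34 Hn.
case: Hb => [<-|Hb]; first exact: b35 Hn.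
case: Hb => [<-|Hb]; first exact: b36 Hn.
case: Hb => [<-|Hb]; first exact: b37 Hn.
case: Hb => [<-|Hb]; first exact: b38 Hn.
case: Hb => [<-|Hb]; first exact: b39 Hn.
case: Hb => [<-|Hb]; first exact: b40 Hn.
by case: Hb.
Qed.
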